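(* Let $p\in(1,\infty)$ and let $G=(X,b,m,0)$ be a weighted graph (potential $c=0$). Let $W\subseteq X$ be such that its interior boundary $\partial_iW$ is finite. If the subgraph $G_W=(W,b|_{W\times W},m|_W,0)$ is $p$-hyperbolic, then $G$ is $p$-hyperbolic.
   Context: Weighted graph $G=(X,b,m,c)$: $X$ countably infinite; $b$ symmetric, nonnegative, zero on the diagonal, $\sum_yb(x,y)<\infty$; $m>0$; $c\ge0$; $x\sim y$ iff $b(x,y)>0$; $X$ connected. $\partial_iW=\{y\in W:y\sim z\text{ for some }z\in X\setminus W\}$. For a graph with vertex set $V$ and weight $b'$ (and potential $0$), $\mathcal{E}_p(f)=\frac12\sum_{x,y\in V}b'(x,y)|f(x)-f(y)|^p$; it is $p$-parabolic if $\inf\{\mathcal{E}_p(\varphi):\varphi\text{ finitely supported on }V,\ \varphi\ge1\text{ on }K\}=0$ for every finite $K\subseteq V$, and $p$-hyperbolic otherwise. *)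

(* Defs.v *)
From HB Require Import structures.
From mathcomp Require Import all_boot all_order all_algebra.
From mathcomp Require Import all_classical all_reals all_analysis.
From Stdlib Require Import Relations.
Set Implicit Arguments. Unset Strict Implicit. Unset Printing Implicit Defensive.
Import Order.TTheory GRing.Theory Num.Theory.
Local Open Scope classical_set_scope.
Local Open Scope ring_scope.

Section defs.
Context {R : realType} {X : choiceType}.

Definition weighted_graph (b : X -> X -> R) (m : X -> R) (c : X -> R) : Prop :=
  (countable [set: X] /\ ~ finite_set [set: X]) /\
  (forall x y, b x y = b y x) /\
  (forall x y, 0 <= b x y) /\
  (forall x, b x x = 0) /\
  (forall x, (\esum_(y in [set: X]) (b x y)%:E < +oo)%E) /\
  (forall x, 0 < m x) /\
  (forall x, 0 <= c x) /\
  (forall x y, clos_refl_trans X (fun u v => 0 < b u v) x y).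

Definition interior_boundary (b : X -> X -> R) (W : set X) : set X :=
  [set y | W y /\ exists z, ~ W z /\ 0 < b y z].

(* A graph with vertex set V (a subset of the ambient type X) and weight b'
   (potential 0).  Functions on V are represented by functions on X whose
   support is contained in V. *)
Definition energy (p : R) (b' : X -> X -> R) (V : set X) (f : X -> R) : \bar R :=
  ((2%:R^-1)%:E * \esum_(xy in V `*` V)
      (b' xy.1 xy.2 * powR `|f xy.1 - f xy.2| p)%:E)%E.

Definition finitely_supported_on (V : set X) (f : X -> R) : Prop :=
  finite_set [set x | f x != 0] /\ [set x | f x != 0] `<=` V.

Definition p_parabolic (p : R) (b' : X -> X -> R) (V : set X) : Prop :=
  forall K : set X, K `<=` V -> finite_set K ->
    ereal_inf [set energy p b' V f | f in
      [set f | finitely_supported_on V f /\ (forall x, K x -> 1 <= f x)]] = 0%E.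

Definition p_hyperbolic (p : R) (b' : X -> X -> R) (V : set X) : Prop :=
  ~ p_parabolic p b' V.

End defs.

(* Main.v *)
Require Import Defs.
From HB Require Import structures.
From mathcomp Require Import all_boot all_order all_algebra.
From mathcomp Require Import all_classical all_reals all_analysis.
Import Order.TTheory GRing.Theory Num.Theory.
Local Open Scope classical_set_scope.
Local Open Scope ring_scope.

Lemma energy_restr (R : realType) (X : choiceType) (b : X -> X -> R) (p : R)
  (W : set X) (f : X -> R) :
  (forall x y, 0 <= b x y) ->
  (energy p b W (fun x => if pselect (W x) is left _ then f x else 0%R)
   <= energy p b [set: X] f)%E.
Proof.
move=> b0; rewrite /energy; apply: lee_wpmul2l; first by rewrite lee_fin invr_ge0.
rewrite esum_mkcond [X in (_ <= X)%E]esum_mkcond; apply: le_esum => [[x y]] _ /=.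
have t0 : (0 <= (b x y * powR `|f x - f y| p)%:E)%E.
  by rewrite lee_fin mulr_ge0 // powR_ge0.
case: ifPn => [|_]; last by case: ifPn.
rewrite inE => -[/= Wx Wy]; rewrite ifT; last by rewrite inE.
case: pselect => // _; case: pselect => //.
Qed.

Theorem proposition4p7 (R : realType) (X : choiceType) (b : X -> X -> R)
  (m : X -> R) (p : R) (W : set X) :
  1 < p ->
  weighted_graph b m (fun _ => 0) ->
  finite_set (interior_boundary b W) ->
  p_hyperbolic p b W ->
  p_hyperbolic p b [set: X].
Proof.
move=> _ [_ [_ [b0 _]]] _ HW HX; apply: HW => K KW finK.
have := HX K (fun _ _ => I) finK => HXK.
apply/eqP; rewrite eq_le; apply/andP; split.
  rewrite -HXK; apply: le_ereal_inf_tmp => _ [f [[finf _] Kf] <-].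
  apply: ereal_inf_le.
  exists (energy p b W (fun x => if pselect (W x) is left _ then f x else 0%R));
    last exact: energy_restr.
  exists (fun x => if pselect (W x) is left _ then f x else 0%R) => //.
  split; [split|].
  - apply: sub_finite_set finf => x /=; case: pselect => //; by rewrite eqxx.
  - by move=> x /=; case: pselect => //; rewrite eqxx.
  - by move=> x Kx; case: pselect => [_|/(_ (KW _ Kx))//]; exact: Kf.
apply: le_ereal_inf_tmp => _ [f _ <-]; rewrite /energy.
apply: mule_ge0; first by rewrite lee_fin invr_ge0.
apply: esum_ge0 => -[x y] _; by rewrite lee_fin mulr_ge0 // powR_ge0.
Qed.
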